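(* Let $m,n\ge 3$ with $m\neq n$. Let $\circ$ be any one of the four boolean operations union ($\cup$), intersection ($\cap$), difference ($\setminus$) and symmetric difference ($\oplus$). Then the state complexity of $U_m(a,b,\emptyset)\circ U_n(a,b,\emptyset)$ is exactly $mn$.
   Context: The state complexity of a regular language is the number of states of its minimal complete deterministic finite automaton (DFA). For $n\ge 3$, $\mathcal{U}_n(a,b,\emptyset)$ is the DFA over alphabet $\{a,b\}$ with state set $\{0,\dots,n-1\}$, initial state $0$, set of final states $\{n-1\}$, where input $a$ maps $i\mapsto i+1 \pmod n$ (a cycle of all states) and input $b$ swaps states $0$ and $1$ and fixes all other states. $U_n(a,b,\emptyset)$ is the language accepted by $\mathcal{U}_n(a,b,\emptyset)$. For languages $K,L$: $K\setminus L$ is set difference and $K\oplus L=(K\setminus L)\cup(L\setminus K)$. *)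

(* Defs.v *)
From mathcomp Require Import all_boot.
Set Implicit Arguments. Unset Strict Implicit. Unset Printing Implicit Defensive.

Inductive sym := a | b.

Definition word := seq sym.
Definition language := word -> bool.

(* A complete DFA over {a,b} with k states, the states being 'I_k
   (every finite complete DFA is isomorphic to one of this form). *)
Record dfa (k : nat) := DFA {
  init  : 'I_k;
  delta : 'I_k -> sym -> 'I_k;
  final : pred 'I_k
}.

Definition accepts k (D : dfa k) (w : word) : bool :=
  final D (foldl (delta D) (init D) w).

Definition recognizes k (D : dfa k) (L : language) : Prop :=
  forall w, accepts D w = L w.

Definition state_complexity (L : language) (k : nat) : Prop :=
  (exists D : dfa k, recognizes D L) /\
  (forall k' (D : dfa k'), recognizes D L -> k <= k').

(* The DFA U_n(a,b,emptyset): states 0..n-1, initial 0, final {n-1},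
   a : i |-> i+1 mod n, b : swaps 0 and 1, fixes the rest. *)
Definition u_step (n : nat) (i : nat) (c : sym) : nat :=
  match c with
  | a => i.+1 %% n
  | b => if i == 0 then 1 else if i == 1 then 0 else i
  end.

Definition U (n : nat) : language :=
  fun w => foldl (u_step n) 0 w == n.-1.

Inductive boolop := Union | Inter | Diff | SymDiff.

Definition bop (o : boolop) (x y : bool) : bool :=
  match o with
  | Union => x || y
  | Inter => x && y
  | Diff => x && ~~ y
  | SymDiff => x (+) y
  end.

Definition lang_op (o : boolop) (K L : language) : language :=
  fun w => bop o (K w) (L w).

(* Main.v *)
Require Import Defs.
From mathcomp Require Import all_boot zify.

Definition R k i (w : word) := foldl (u_step k) i w.

Lemma R_cat k i w1 w2 : R k i (w1 ++ w2) = R k (R k i w1) w2.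
Proof. by rewrite /R foldl_cat. Qed.

Lemma step_lt k i c : 2 <= k -> i < k -> u_step k i c < k.
Proof.
move=> hk hi; case: c => /=; first by rewrite ltn_pmod //; lia.
case: ifP => _; first lia. case: ifP => _; lia.
Qed.

Lemma R_lt k i w : 2 <= k -> i < k -> R k i w < k.
Proof. move=> hk; elim: w i => [|c w IH] i hi //=. exact/IH/step_lt. Qed.

Lemma step_inj k i j c : 2 <= k -> i < k -> j < k -> u_step k i c = u_step k j c -> i = j.
Proof.
move=> hk hi hj; case: c => /=.
  move=> /eqP; rewrite -(addn1 i) -(addn1 j) eqn_modDr !modn_small //.
  by move/eqP.
by repeat (case: eqP => ? /=); lia.
Qed.

Lemma R_inj k i j w : 2 <= k -> i < k -> j < k -> R k i w = R k j w -> i = j.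
Proof.
move=> hk; elim: w i j => [|c w IH] i j hi hj //= h.
apply: (@step_inj k i j c) => //; apply: IH h; exact: step_lt.
Qed.

Lemma R_a k i t : 0 < k -> i < k -> R k i (nseq t a) = (i + t) %% k.
Proof.
move=> hk; elim: t i => [|t IH] i hi /=; first by rewrite addn0 modn_small.
rewrite IH; last by rewrite ltn_pmod.
by rewrite modnDml addSnnS.
Qed.

Fixpoint cw t : word := if t is t'.+1 then a :: b :: cw t' else [::].
Definition cyc k i := u_step k (u_step k i a) b.

Lemma R_cwS k i t : R k i (cw t.+1) = R k (cyc k i) (cw t).
Proof. by []. Qed.

Lemma R_cw_cat k i t1 t2 : R k i (cw (t1 + t2)) = R k (R k i (cw t1)) (cw t2).
Proof. by elim: t1 i => [|t IH] i //=; rewrite -IH. Qed.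

Lemma R_c0 k t : 2 <= k -> R k 0 (cw t) = 0.
Proof.
move=> hk; elim: t => [|t IH] //; rewrite R_cwS.
by rewrite /cyc /= modn_small.
Qed.

Lemma R_cup k x t : 1 <= x -> x + t < k -> R k x (cw t) = x + t.
Proof.
elim: t x => [|t IH] x h1 h2; first by rewrite addn0.
rewrite R_cwS /cyc /= modn_small; last lia.
have -> : (x.+1 == 0) = false by [].
have -> : (x.+1 == 1) = false by apply/eqP; lia.
rewrite IH; lia.
Qed.

Lemma R_cwrap k t : 2 <= k -> t.+1 < k -> R k k.-1 (cw t.+1) = t.+1.
Proof.
move=> hk ht; rewrite R_cwS /cyc /=.
have -> : k.-1.+1 = k by lia.
by rewrite modnn /= R_cup //; lia.
Qed.

Lemma cyc_reach m n y y' : 2 <= m -> 2 <= n -> 1 <= y < n -> 1 <= y' < n ->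
  exists w, R m 0 w = 0 /\ R n y w = y'.
Proof.
move=> hm hn /andP[y1 y2] /andP[z1 z2].
case: (leqP y y') => hyy.
  exists (cw (y' - y)); split; first exact: R_c0.
  rewrite R_cup; lia.
exists (cw ((n.-1 - y) + (y'.-1).+1)); split; first exact: R_c0.
rewrite R_cw_cat (@R_cup n y (n.-1 - y)); try lia.
have -> : y + (n.-1 - y) = n.-1 by lia.
rewrite R_cwrap; lia.
Qed.
Definition Conn m n p1 p2 q1 q2 := exists w, R m p1 w = q1 /\ R n p2 w = q2.

Lemma conn_trans m n p1 p2 r1 r2 q1 q2 :
  Conn m n p1 p2 r1 r2 -> Conn m n r1 r2 q1 q2 -> Conn m n p1 p2 q1 q2.
Proof.
move=> [w1 [h1 h2]] [w2 [h3 h4]]; exists (w1 ++ w2).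
by rewrite !R_cat h1 h2 h3 h4.
Qed.

Lemma conn_lt m n p1 p2 q1 q2 : 3 <= m -> m < n -> p1 < m -> p2 < n -> q1 < m -> q2 < n ->
  Conn m n p1 p2 q1 q2.
Proof.
move=> hm hmn hp1 hp2 hq1 hq2.
have hz : forall y, y < n -> Conn m n 0 y 0 0.
  move=> y hy; case: (posnP y) => [->|y0]; first by exists [::].
  apply: (@conn_trans _ _ _ _ 0 (n - m)).
    apply: cyc_reach; lia.
  exists (nseq m a); rewrite !R_a; try lia.
  rewrite add0n modnn subnK; last lia.
  by rewrite modnn.
have hz' : forall y, y < n -> Conn m n 0 0 0 y.
  move=> y hy; case: (posnP y) => [->|y0]; first by exists [::].
  apply: (@conn_trans _ _ _ _ 0 m).
    exists (nseq m a); rewrite !R_a; try lia.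
    by rewrite add0n modnn modn_small.
  apply: cyc_reach; lia.
apply: (@conn_trans _ _ _ _ 0 ((p2 + (m - p1)) %% n)).
  exists (nseq (m - p1) a); rewrite !R_a; try lia.
  by rewrite subnKC ?modnn //; lia.
apply: (@conn_trans _ _ _ _ 0 0); first by apply: hz; rewrite ltn_pmod //; lia.
apply: (@conn_trans _ _ _ _ 0 ((q2 + (n - q1)) %% n)).
  apply: hz'; rewrite ltn_pmod //; lia.
exists (nseq q1 a); rewrite !R_a; try lia.
rewrite add0n modn_small //; split => //.
by rewrite modnDml -addnA subnK ?modnDr ?modn_small //; lia.
Qed.

Lemma conn m n p1 p2 q1 q2 : 3 <= m -> 3 <= n -> m != n ->
  p1 < m -> p2 < n -> q1 < m -> q2 < n -> Conn m n p1 p2 q1 q2.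
Proof.
move=> hm hn hmn hp1 hp2 hq1 hq2.
case: (ltngtP m n) => h; first exact: conn_lt.
  have [w [h1 h2]] := @conn_lt n m p2 p1 q2 q1 hn h hp2 hp1 hq2 hq1.
  by exists w.
by rewrite h eqxx in hmn.
Qed.
Definition F o m n x y := bop o (x == m.-1) (y == n.-1).

Lemma move_to m n p1 p2 q1 q2 t1 t2 : 3 <= m -> 3 <= n -> m != n ->
  p1 < m -> p2 < n -> q1 < m -> q2 < n -> t1 < m -> t2 < n ->
  exists w, [/\ R m p1 w = t1, R n p2 w = t2, R m q1 w < m, R n q2 w < n &
     (p1 != q1 -> R m q1 w != t1) /\ (p2 != q2 -> R n q2 w != t2)].
Proof.
move=> hm hn hmn hp1 hp2 hq1 hq2 ht1 ht2.
have [w [h1 h2]] := @conn m n p1 p2 t1 t2 hm hn hmn hp1 hp2 ht1 ht2.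
exists w; split => //; try (apply: R_lt; lia).
split=> /eqP ne; apply/eqP => e; apply: ne.
  by apply: (@R_inj m p1 q1 w) => //; [lia | rewrite h1 e].
by apply: (@R_inj n p2 q2 w) => //; [lia | rewrite h2 e].
Qed.

Lemma dist o m n p1 p2 q1 q2 : 3 <= m -> 3 <= n -> m != n ->
  p1 < m -> p2 < n -> q1 < m -> q2 < n -> (p1 != q1) || (p2 != q2) ->
  exists s, F o m n (R m p1 s) (R n p2 s) != F o m n (R m q1 s) (R n q2 s).
Proof.
move=> hm hn hmn hp1 hp2 hq1 hq2 hne.
have mv := @move_to m n p1 p2 q1 q2 _ _ hm hn hmn hp1 hp2 hq1 hq2.
have hm1 : m.-1 < m by lia.
have hn1 : n.-1 < n by lia.
have hm0 : 0 < m by lia.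
have hn0 : 0 < n by lia.
have e10 : (0 == m.-1) = false by apply/eqP; lia.
have e20 : (0 == n.-1) = false by apply/eqP; lia.
case: o.
-
  case: (eqVneq p2 q2) => [e2|ne2].
    have [w [h1 h2 v1 v2 [d1 d2]]] := mv _ _ hm1 hn0.
    exists w; rewrite /F h1 h2 -e2 h2 !eqxx e20 /=.
    have ne1 : p1 != q1 by move: hne; rewrite e2 eqxx orbF.
    by rewrite (negbTE (d1 ne1)).
  case: (eqVneq p1 q1) => [e1|ne1].
    have [w [h1 h2 v1 v2 [d1 d2]]] := mv _ _ hm0 hn1.
    exists w; rewrite /F h1 h2 -e1 h1 !eqxx e10 /=.
    by rewrite (negbTE (d2 ne2)).
  have [w [h1 h2 v1 v2 [d1 d2]]] := mv _ _ hm1 hn1.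
  exists w; rewrite /F h1 h2 !eqxx /=.
  by rewrite (negbTE (d1 ne1)) (negbTE (d2 ne2)).
-
  have [w [h1 h2 v1 v2 [d1 d2]]] := mv _ _ hm1 hn1.
  exists w; rewrite /F h1 h2 !eqxx /=.
  case/orP: hne => [ne1|ne2].
    by rewrite (negbTE (d1 ne1)).
  by rewrite (negbTE (d2 ne2)) andbF.
-
  case: (eqVneq p1 q1) => [e1|ne1].
    have ne2 : p2 != q2 by move: hne; rewrite e1 eqxx.
    have [w [h1 h2 v1 v2 [d1 d2]]] := mv _ _ hm1 hn1.
    exists w; rewrite /F h1 h2 -e1 h1 !eqxx /=.
    by rewrite (negbTE (d2 ne2)).
  have [w [h1 h2 v1 v2 [d1 d2]]] := mv _ _ hm1 hn0.
  exists w; rewrite /F h1 h2 !eqxx e20 /=.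
  by rewrite (negbTE (d1 ne1)).
-
  case: (eqVneq p2 q2) => [e2|ne2].
    have [w [h1 h2 v1 v2 [d1 d2]]] := mv _ _ hm1 hn0.
    exists w; rewrite /F h1 h2 -e2 h2 !eqxx e20 /=.
    have ne1 : p1 != q1 by move: hne; rewrite e2 eqxx orbF.
    by rewrite (negbTE (d1 ne1)).
  case: (eqVneq p1 q1) => [e1|ne1].
    have [w [h1 h2 v1 v2 [d1 d2]]] := mv _ _ hm0 hn1.
    exists w; rewrite /F h1 h2 -e1 h1 !eqxx e10 /=.
    by rewrite (negbTE (d2 ne2)).
  have [w [h1 h2 v1 v2 [d1 d2]]] := mv _ _ hm0 hn0.
  set x := R m q1 w in v1 d1 *; set y := R n q2 w in v2 d2 *.
  have x0 : 0 < x by move: (d1 ne1); lia.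
  have y0 : 0 < y by move: (d2 ne2); lia.
  set s2 := cw (m.-1 - x).
  have ex : R m x s2 = m.-1 by rewrite R_cup; lia.
  have vy : R n y s2 < n by apply: R_lt; lia.
  case: (eqVneq (R n y s2) n.-1) => ey.
    exists (w ++ s2 ++ cw (minn m n).-2.+1).
    rewrite /F !R_cat h1 h2 -/x -/y !R_c0 ?ex ?ey; try lia.
    rewrite !R_cwrap; try lia.
    rewrite e10 e20 /=.
    case: (ltngtP m n) => h.
      have -> : (m.-2.+1 == m.-1) = true by apply/eqP; lia.
      have -> : (m.-2.+1 == n.-1) = false by apply/eqP; lia.
      by [].
      have -> : (n.-2.+1 == m.-1) = false by apply/eqP; lia.
      have -> : (n.-2.+1 == n.-1) = true by apply/eqP; lia.
      by [].
    + by rewrite h eqxx in hmn.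
  exists (w ++ s2).
  rewrite /F !R_cat h1 h2 -/x -/y !R_c0 ?ex; try lia.
  by rewrite e10 e20 eqxx (negbTE ey).
Qed.
Lemma langE o m n w : lang_op o (U m) (U n) w = F o m n (R m 0 w) (R n 0 w).
Proof. by []. Qed.

Theorem theorem1 (m n : nat) (o : boolop) :
  3 <= m -> 3 <= n -> m != n ->
  state_complexity (lang_op o (U m) (U n)) (m * n).
Proof.
move=> hm hn hmn.
have hn0 : 0 < n by lia.
split.
  have hmn0 : 0 < m * n by rewrite muln_gt0; apply/andP; split; lia.
  pose s0 : 'I_(m * n) := Ordinal hmn0.
  pose dl := fun (s : 'I_(m * n)) c =>
    insubd s0 (u_step m (s %/ n) c * n + u_step n (s %% n) c) : 'I_(m * n).
  exists (DFA s0 dl (fun s : 'I_(m * n) => F o m n (s %/ n) (s %% n))).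
  have inv : forall w (s : 'I_(m * n)) i j, i < m -> j < n -> val s = i * n + j ->
      val (foldl dl s w) = R m i w * n + R n j w.
    elim=> [|c w IH] s i j hi hj hs //=.
    apply: IH; try (apply: step_lt; lia).
    rewrite val_insubd hs divnMDl // modnMDl (divn_small hj) addn0 (modn_small hj).
    have h1 := @step_lt m i c ltac:(lia) hi.
    have h2 := @step_lt n j c ltac:(lia) hj.
    have -> : u_step m i c * n + u_step n j c < m * n by nia.
    by [].
  move=> w; rewrite /accepts /= langE.
  rewrite (inv w s0 0 0) //; try lia.
  have h1 := @R_lt m 0 w ltac:(lia) ltac:(lia).
  have h2 := @R_lt n 0 w ltac:(lia) ltac:(lia).
  by rewrite divnMDl // modnMDl (divn_small h2) addn0 (modn_small h2).
move=> k D hD.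
have ex : forall p : 'I_m * 'I_n, exists st : 'I_k, exists w,
    [/\ R m 0 w = p.1, R n 0 w = p.2 & foldl (delta D) (init D) w = st].
  move=> [x1 x2] /=.
  have [w [h1 h2]] := @conn m n 0 0 x1 x2 hm hn hmn ltac:(lia) ltac:(lia) (ltn_ord x1) (ltn_ord x2).
  by exists (foldl (delta D) (init D) w), w.
have [f hf] := fin_all_exists ex.
have inj : injective f.
  move=> p q e; apply/eqP; apply: contraT => ne.
  have [wp [hp1 hp2 hp3]] := hf p.
  have [wq [hq1 hq2 hq3]] := hf q.
  move: ne; case: p e hp1 hp2 hp3 => [x1 x2]; case: q hq1 hq2 hq3 => [y1 y2] /=.
  move=> hq1 hq2 hq3 e hp1 hp2 hp3.
  rewrite xpair_eqE negb_and -!val_eqE => ne.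
  have [s hs] := @dist o m n x1 x2 y1 y2 hm hn hmn (ltn_ord x1) (ltn_ord x2) (ltn_ord y1) (ltn_ord y2) ne.
  move: hs; rewrite -hp1 -hp2 -hq1 -hq2 -!R_cat -!langE -!hD /accepts !foldl_cat.
  by rewrite hp3 hq3 e eqxx.
have := leq_card f inj.
by rewrite card_prod !card_ord.
Qed.
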